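(* Let $(Z,d)$ be an infinite compact metric space and $\Gamma$ an essential approximation graph for $Z$. Then $\mathcal I_\Gamma$ is a dense $G_\delta$-subset of $\mathcal P_\Gamma$.
   Context: A refining sequence is a sequence $(\mathcal V_n)_{n\ge0}$ of finite covers of $Z$, all open or all closed with nonempty interiors, with $\mathcal V_0=\{Z\}$, each element of $\mathcal V_{n+1}$ contained in some element of $\mathcal V_n$, and $\max_{v\in\mathcal V_n}\operatorname{diam}v\to0$. Its approximation graph $\Gamma$ has vertices $\coprod_n\mathcal V_n$ and an edge from $v_n\in\mathcal V_n$ to $v_{n+1}\in\mathcal V_{n+1}$ whenever $v_{n+1}\subset v_n$. The infinite path space $\mathcal P_\Gamma$ is the set of sequences of edges $(p_n)_{n\ge0}$, $p_n$ from some $v_n\in\mathcal V_n$ to some $v_{n+1}\in\mathcal V_{n+1}$, consecutive edges sharing their common vertex, with the compact topology generated by cylinder sets (paths with prescribed first finitely many edges). With $r(p_n)=v_{n+1}$, $\pi_\Gamma(\tilde p)$ is the unique point of $\bigcap_n\operatorname{cl}(r(p_n))$. $\mathcal I_\Gamma=\{\tilde p\in\mathcal P_\Gamma:\#\pi_\Gamma^{-1}(\pi_\Gamma(\tilde p))=1\}$. Overlapping set $\mathcal Y_n=\{\operatorname{cl}(v)\cap\operatorname{cl}(w):v\ne w\in\mathcal V_n\}$; $v^{\mathrm{ess}}=\operatorname{int}(v)\setminus\bigcup\mathcal Y_n$, $\mathcal V_n^{\mathrm{ess}}=\{v^{\mathrm{ess}}:v\in\mathcal V_n\}$. $\Gamma$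 is regular if for every $n\in\mathbb N$ and $v\in\mathcal V_n$: $v=\bigcup\{w\in\mathcal V_{n+1}:w\subset v\}$ and $v^{\mathrm{ess}}\ne\varnothing$. $\Gamma$ is essential if it is regular, consists of closed covers, and $\bigcup\mathcal V_n^{\mathrm{ess}}$ is dense in $Z$ for every $n\in\mathbb N$. *)

(* Defs.v *)
From HB Require Import structures.
From mathcomp Require Import all_boot all_order all_algebra.
From mathcomp Require Import all_classical all_reals all_analysis.
Set Implicit Arguments. Unset Strict Implicit. Unset Printing Implicit Defensive.
Import Order.TTheory GRing.Theory Num.Theory.
Import numFieldNormedType.Exports.
Local Open Scope classical_set_scope.
Local Open Scope ring_scope.

Section ApproxGraph.
Context {R : realType} {Z : metricType R}.

(* diameter of a subset of Z (extended real valued; -oo for the empty set) *)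
Definition diam (v : set Z) : \bar R :=
  ereal_sup [set (mdist xy.1 xy.2)%:E | xy in v `*` v].

Definition refining_closed (V : nat -> set (set Z)) : Prop :=
  [/\ (forall n, finite_set (V n)),
      (forall n, \bigcup_(v in V n) v = [set: Z]),
      (forall n v, V n v -> closed v /\ interior v !=set0),
      V 0%N = [set [set: Z]] &
      ((forall n w, V n.+1 w -> exists2 v, V n v & w `<=` v) /\
       ((fun n => ereal_sup [set diam v | v in V n]) @ \oo --> 0%E))].

Definition overlap (V : nat -> set (set Z)) (n : nat) : set (set Z) :=
  [set y | exists v w, [/\ V n v, V n w, v <> w & y = closure v `&` closure w]].

Definition ess (V : nat -> set (set Z)) (n : nat) (v : set Z) : set Z :=
  interior v `\` \bigcup_(y in overlap V n) y.

Definition Vess (V : nat -> set (set Z)) (n : nat) : set (set Z) :=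
  [set ess V n v | v in V n].

Definition regular (V : nat -> set (set Z)) : Prop :=
  forall n v, V n v ->
    v = \bigcup_(w in [set w | V n.+1 w /\ w `<=` v]) w /\ ess V n v !=set0.

(* essential approximation graph (closed covers are built into refining_closed) *)
Definition essential (V : nat -> set (set Z)) : Prop :=
  [/\ refining_closed V, regular V &
      forall n, dense (\bigcup_(e in Vess V n) e)].

(* infinite paths in the approximation graph, encoded by their vertex
   sequence v_0 = Z, v_1, v_2, ... (edges are determined by their endpoints) *)
Definition Ppath (V : nat -> set (set Z)) : set (nat -> set Z) :=
  [set p | forall n, V n (p n) /\ p n.+1 `<=` p n].

(* open sets of the path space: unions of cylinder sets *)
Definition Popen (V : nat -> set (set Z)) (U : set (nat -> set Z)) : Prop :=
  U `<=` Ppath V /\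
  forall p, U p -> exists N : nat, forall q, Ppath V q ->
    (forall n, (n <= N)%N -> q n = p n) -> U q.

Definition Pdense (V : nat -> set (set Z)) (S : set (nat -> set Z)) : Prop :=
  forall O, O !=set0 -> Popen V O -> O `&` S !=set0.

Definition PGdelta (V : nat -> set (set Z)) (S : set (nat -> set Z)) : Prop :=
  exists2 F : nat -> set (nat -> set Z),
    (forall i, Popen V (F i)) & S = \bigcap_i F i.

(* the set \bigcap_n cl(r(p_n)), which is the singleton {pi_Gamma(p)} *)
Definition pi_set (p : nat -> set Z) : set Z := \bigcap_n closure (p n.+1).

Definition IG (V : nat -> set (set Z)) : set (nat -> set Z) :=
  [set p | Ppath V p /\
     [set q | Ppath V q /\ pi_set q = pi_set p] = [set p]].

End ApproxGraph.

(* Main.v *)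
Require Import Defs.
From HB Require Import structures.
From mathcomp Require Import all_boot all_order all_algebra.
From mathcomp Require Import all_classical all_reals all_analysis.
Set Implicit Arguments. Unset Strict Implicit. Unset Printing Implicit Defensive.
Import Order.TTheory GRing.Theory Num.Theory.
Import numFieldNormedType.Exports.
Local Open Scope classical_set_scope.
Local Open Scope ring_scope.

Section P.
Context {R : realType} {Z : metricType R} (V : nat -> set (set Z)).
Context (cZ : compact [set: Z]) (eV : essential V).

Let rc : refining_closed V. Proof. by case: eV. Qed.
Let rg : regular V. Proof. by case: eV. Qed.

Lemma closedV n v : V n v -> closed v.
Proof. by case: rc => _ _ h _ _ /h[]. Qed.

Lemma intV n v : V n v -> interior v !=set0.
Proof. by case: rc => _ _ h _ _ /h[]. Qed.

Lemma finV n : finite_set (V n).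
Proof. by case: rc. Qed.

Lemma coverV n x : exists2 w, V n w & w x.
Proof.
case: rc => _ h _ _ _.
have : (\bigcup_(v in V n) v) x by rewrite h.
by case=> w Hw wx; exists w.
Qed.

Lemma V0 : V 0%N = [set [set: Z]].
Proof. by case: rc. Qed.

Lemma parentV n w : V n.+1 w -> exists2 v, V n v & w `<=` v.
Proof. by case: rc => _ _ _ _ [h _]; apply: h. Qed.

Lemma childV n v x : V n v -> v x -> exists2 w, V n.+1 w & w `<=` v /\ w x.
Proof.
move=> Vv vx; have [E _] := rg Vv.
move: vx; rewrite {1}E => -[w [Vw wv] wx]; by exists w.
Qed.

Lemma closed_finU n (P : set Z -> Prop) : closed (\bigcup_(w in V n `&` P) w).
Proof.
apply: closed_bigcup.
  exact: (sub_finite_set (@subIsetl _ _ _) (finV n)).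
by move=> w [Vw _]; exact: closedV Vw.
Qed.

Lemma diamV r : 0 < r -> exists K, forall w a b, V K w -> w a -> w b -> mdist a b < r.
Proof.
move=> r0; case: rc => _ _ _ _ [_ /fine_cvgP[[N1 _ HN1] h]].
have := cvgr_dist_lt _ _ h _ r0.
move=> [N _ HN]; exists (maxn N N1) => w a b Vw wa wb.
have := HN (maxn N N1) (leq_maxl _ _) => /=.
have := HN1 (maxn N N1) (leq_maxr _ _) => /=.
set s := ereal_sup _ => sfin.
rewrite sub0r normrN => hs.
have h1 : ((mdist a b)%:E <= s)%E.
  apply: (@le_trans _ _ (diam w)).
    by apply: ereal_sup_ubound; exists (a, b).
  by apply: ereal_sup_ubound; exists w.
rewrite -(fineK sfin) lee_fin in h1.
exact: (le_lt_trans h1 (le_lt_trans (ler_norm _) hs)).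
Qed.

Lemma insideV O : open O -> O !=set0 -> exists K w, V K w /\ w `<=` O.
Proof.
move=> oO [x Ox].
have : nbhs x O by apply: open_nbhs_nbhs; split.
move/nbhs_ballP => [e /= e0 hb].
have [K HK] := diamV e0.
have [w Vw wx] := coverV K x.
exists K, w; split => // z wz; apply: hb.
by rewrite ballEmdist /=; apply: HK Vw wx wz.
Qed.

Lemma nested_mono (W : nat -> set Z) : (forall n, W n.+1 `<=` W n) ->
  forall m n, (m <= n)%N -> W n `<=` W m.
Proof.
move=> h m n /subnK <-; elim: (n - m)%N => [|k IH] //=.
by rewrite addSn; apply: subset_trans (h _) IH.
Qed.

Lemma compact_nested (W : nat -> set Z) : (forall n, closed (W n)) ->
  (forall n, W n !=set0) -> (forall n, W n.+1 `<=` W n) ->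
  exists y, forall n, W n y.
Proof.
move=> cW nW dW.
have mono := nested_mono dW.
have FF : Filter (filter_from setT W).
  apply: filter_fromT_filter; first by exists 0%N.
  move=> i j; exists (maxn i j) => z Wz; split.
    exact: (mono _ _ (leq_maxl i j)).
  exact: (mono _ _ (leq_maxr i j)).
have PF : ProperFilter (filter_from setT W).
  by apply: filter_from_proper => i _; exact: nW.
have [y [_ cly]] := cZ PF (filterT).
exists y => n; rewrite ((closure_id (W n)).1 (cW n)).
move=> B nB; have := cly (W n) B.
by apply => //; exists n.
Qed.

Lemma path_mono p : Ppath V p -> forall m n, (m <= n)%N -> p n `<=` p m.
Proof. by move=> P; apply: nested_mono => n; case: (P n). Qed.

Lemma path0 p : Ppath V p -> p 0%N = [set: Z].
Proof. by move=> P; have [] := P 0%N; rewrite V0. Qed.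

Lemma path_up n w y : V n w -> w y -> exists s : nat -> set Z,
  [/\ s n = w, (forall m, (m < n)%N -> V m (s m) /\ s m.+1 `<=` s m) &
      (forall m, (m <= n)%N -> s m y)].
Proof.
elim: n w => [|n IH] w Vw wy.
  by exists (fun _ => w); split => // m; rewrite leqn0 => /eqP ->.
have [v Vv wv] := parentV Vw.
have [s [sn h1 h2]] := IH v Vv (wv _ wy).
exists (fun m => if m == n.+1 then w else s m); split.
- by rewrite /= eqxx.
- move=> m lm; rewrite (ltn_eqF lm); case: (ltngtP m n) => [mn|nm|->].
    by rewrite eqSS (ltn_eqF mn); exact: h1.
    by move: lm; rewrite ltnS leqNgt nm.
  by rewrite eqxx sn.
- move=> m; case: eqP => [//|/eqP ne lm].
  by apply: h2; rewrite -ltnS ltn_neqAle ne.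
Qed.

Lemma path_through n w y : V n w -> w y ->
  exists q, [/\ Ppath V q, q n = w & forall m, q m y].
Proof.
move=> Vw wy.
have [s [sn h1 h2]] := path_up Vw wy.
have hc : forall ku : nat * set Z, exists c : set Z,
    V (n + ku.1)%N ku.2 /\ ku.2 y -> [/\ V (n + ku.1).+1 c, c `<=` ku.2 & c y].
  move=> [k u] /=; case: (pselect (V (n + k)%N u /\ u y)) => [[Vu uy]|nH].
    have [c Vc [cu cy]] := childV Vu uy.
    by exists c.
  by exists u.
have [ch Hch] := choice hc.
pose d := fix d k := match k with 0%N => w | k'.+1 => ch (k', d k') end.
have hd : forall k, V (n + k)%N (d k) /\ d k y.
  elim=> [|k [IH1 IH2]]; first by rewrite addn0.
  by have [? ? ?] := Hch (k, d k) (conj IH1 IH2); rewrite addnS.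
pose q m := if (m <= n)%N then s m else d (m - n)%N.
have qd : forall m, (n <= m)%N -> q m = d (m - n)%N.
  move=> m nm; rewrite /q; case: leqP => // mn.
  have -> : m = n by apply/eqP; rewrite eqn_leq mn nm.
  by rewrite subnn sn.
exists q; split.
- move=> m; case: (ltnP m n) => mn.
    rewrite /q (ltnW mn) mn; exact: h1.
  rewrite !qd ?(leqW mn) // subSn //=.
  have [Vd dy] := hd (m - n)%N.
  have [_ c1 _] := Hch ((m - n)%N, d (m - n)%N) (conj Vd dy).
  by split => //; rewrite -{1}(subnKC mn).
- by rewrite /q leqnn.
- move=> m; rewrite /q; case: leqP => mn; first exact: h2.
  exact: (hd _).2.
Qed.

Lemma pi_mem (q : nat -> set Z) (y : Z) : (forall m, q m y) -> pi_set q y.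
Proof. by move=> h n _; apply: subset_closure; exact: h. Qed.

Lemma pi_all (q : nat -> set Z) (y : Z) : Ppath V q -> pi_set q y -> forall m, q m y.
Proof.
move=> P h [|m]; first by rewrite (path0 P).
have := h m I; have [Vq _] := P m.+1.
by rewrite -((closure_id _).1 (closedV Vq)).
Qed.

Lemma pi_single (q : nat -> set Z) (y : Z) : Ppath V q -> (forall m, q m y) -> pi_set q = [set y].
Proof.
move=> P h; apply/seteqP; split => [z hz|z ->]; last exact: pi_mem.
case: (pselect (z = y)) => // zy.
have : 0 < mdist y z by rewrite mdist_gt0; apply/eqP => e; apply: zy.
move=> /diamV [K HK].
have [VK _] := P K.
have := HK _ _ _ VK (h K) (pi_all P hz K).
by rewrite ltxx.
Qed.

Lemma pi_ne (q : nat -> set Z) : Ppath V q -> exists y, pi_set q y.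
Proof.
move=> P.
have c1 : forall n, closed (q n.+1).
  by move=> n; have [Vq _] := P n.+1; exact: closedV Vq.
have c2 : forall n, q n.+1 !=set0.
  move=> n; have [Vq _] := P n.+1; have [z hz] := intV Vq.
  by exists z; apply: interior_subset.
have c3 : forall n, q n.+2 `<=` q n.+1.
  by move=> n; have [_ ?] := P n.+1.
have [y hy] := compact_nested c1 c2 c3.
exists y; apply: pi_mem => -[|m]; first by rewrite (path0 P).
exact: hy.
Qed.

Lemma IG_uniq (p : nat -> set Z) y : IG V p -> pi_set p y ->
  forall n w, V n w -> w y -> w = p n.
Proof.
move=> [P E] hy n w Vw wy.
have hall := pi_all P hy.
have [q [Pq qn qy]] := path_through Vw wy.
have : [set q | Ppath V q /\ pi_set q = pi_set p] q.
  by split => //; rewrite (pi_single Pq qy) (pi_single P hall).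
by rewrite E => /= eqp; rewrite -qn eqp.
Qed.

Definition Uniq m (y : Z) := forall v v', V m v -> V m v' -> v y -> v' y -> v = v'.

Lemma step m w : closed w -> interior w !=set0 -> exists w',
  [/\ closed w', interior w' !=set0, w' `<=` w & forall y, w' y -> Uniq m y].
Proof.
move=> cw iw.
have dU : dense (\bigcup_(e in Vess V m) e) by case: eV.
have [x [xw [e' [e Ve <-] xe]]] := dU _ iw (@open_interior _ w).
pose C := \bigcup_(v in V m `&` (fun v => v <> e)) v.
have xC : ~ C x.
  move=> [v [Vv ve] vx]; case: xe => xie; apply.
  exists (closure v `&` closure e).
    by exists v, e; split.
  by split; apply: subset_closure => //; apply: interior_subset.
have oO : open (interior w `&` ~` C).
  by apply: openI; [exact: open_interior | apply: closed_openC; exact: closed_finU].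
have [K [w' [Vw' w'O]]] := insideV oO (ex_intro _ x (conj xw xC)).
exists w'; split.
- exact: closedV Vw'.
- exact: intV Vw'.
- by move=> z /w'O [/interior_subset].
- move=> y /w'O [_ yC].
  have H : forall v, V m v -> v y -> v = e.
    move=> v Vv vy; case: (pselect (v = e)) => // ne.
    by exfalso; apply: yC; exists v.
  by move=> v v' Vv Vv' vy v'y; rewrite (H _ Vv vy) (H _ Vv' v'y).
Qed.

Lemma dense_IG : Pdense V (IG V).
Proof.
move=> O [p Op] [sub hO].
have [N HN] := hO p Op.
have Pp := sub p Op.
have hc : forall mw : nat * set Z, exists w' : set Z,
    closed mw.2 /\ interior mw.2 !=set0 ->
    [/\ closed w', interior w' !=set0, w' `<=` mw.2 & forall y, w' y -> Uniq mw.1 y].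
  move=> [m w] /=; case: (pselect (closed w /\ interior w !=set0)) => [[c i]|nH].
    have [w' hw'] := step m c i; by exists w'.
  by exists w.
have [st Hst] := choice hc.
pose W := fix W k := match k with 0%N => p N | k'.+1 => st (k', W k') end.
have hW : forall k, closed (W k) /\ interior (W k) !=set0.
  elim=> [|k [IH1 IH2]] /=.
    have [VpN _] := Pp N; split; [exact: closedV VpN | exact: intV VpN].
  by have [? ? ? ?] := Hst (k, W k) (conj IH1 IH2).
have c1 : forall k, closed (W k) by move=> k; exact: (hW k).1.
have c2 : forall k, W k !=set0.
  by move=> k; have [z hz] := (hW k).2; exists z; apply: interior_subset.
have c3 : forall k, W k.+1 `<=` W k.
  by move=> k; have [? ? ? ?] := Hst (k, W k) (hW k).
have [y hy] := compact_nested c1 c2 c3.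
have U : forall k, Uniq k y.
  by move=> k; have [_ _ _ H] := Hst (k, W k) (hW k); apply: H; exact: hy k.+1.
have V0T : V 0%N [set: Z] by rewrite V0.
have [q [Pq _ qy]] := path_through V0T (I : [set: Z] y).
have pNy : p N y := hy 0%N.
exists q; split.
  apply: HN => // n nN.
  have [Vq _] := Pq n; have [Vp _] := Pp n.
  by apply: U Vq Vp (qy n) _; apply: (path_mono Pp nN).
split => //; apply/seteqP; split => [q' [Pq' e]|q' ->]; last by split.
apply/funext => m.
have : pi_set q' y by rewrite e; apply: pi_mem.
move=> /(pi_all Pq') h.
have [Vq' _] := Pq' m; have [Vq _] := Pq m.
exact: U Vq' Vq (h m) (qy m).
Qed.

Definition Fset n := [set p : nat -> set Z | Ppath V p /\
  exists K, forall w, V n w -> w <> p n -> forall z, p K z -> ~ w z].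

Lemma Fset_open n : Popen V (Fset n).
Proof.
split; first by move=> p [].
move=> p [P [K HK]]; exists (maxn K n) => q Pq agree; split => //.
exists K => w Vw wne z qz.
rewrite agree ?leq_maxr // in wne.
rewrite agree ?leq_maxl // in qz.
exact: HK.
Qed.

Lemma IG_eq : IG V = \bigcap_n Fset n.
Proof.
apply/seteqP; split => [p IGp n _|p hp].
  have P := IGp.1.
  have [y hy] := pi_ne P.
  have hall := pi_all P hy.
  have U := IG_uniq IGp hy.
  pose C := \bigcup_(v in V n `&` (fun v => v <> p n)) v.
  have yC : ~ C y by move=> [v [Vv ne] vy]; apply: ne; exact: U.
  have : nbhs y (~` C).
    apply: open_nbhs_nbhs; split => //.
    by apply: closed_openC; exact: closed_finU.
  move/nbhs_ballP => [e /= e0 hb].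
  have [K HK] := diamV e0.
  split => //; exists K => w Vw wne z pKz wz.
  have [VpK _] := P K.
  have : ball y e z by rewrite ballEmdist /=; exact: HK VpK (hall K) pKz.
  by move/hb; apply; exists w.
have P := (hp 0%N I).1.
split => //; apply/seteqP; split => [q [Pq e]|q ->]; last by split.
have [y hy] := pi_ne P.
have hallp := pi_all P hy.
have : pi_set q y by rewrite e.
move=> /(pi_all Pq) hallq.
apply/funext => n.
have [_ [K HK]] := hp n I.
have [Vq _] := Pq n.
case: (pselect (q n = p n)) => // ne.
by exfalso; apply: (HK _ Vq ne y (hallp K) (hallq n)).
Qed.

End P.

Theorem proposition2p23 (R : realType) (Z : metricType R)
    (V : nat -> set (set Z)) :
  compact [set: Z] -> infinite_set [set: Z] -> essential V ->
  Pdense V (IG V) /\ PGdelta V (IG V).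
Proof.
move=> cZ _ eV; split; first exact: dense_IG.
exists (Fset V); first exact: Fset_open.
exact: IG_eq.
Qed.
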